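(* Let $(X,T)$ be a topological dynamical system and $f\in C(X,\mathbb{R})$. Then for each $x\in X$ and $\epsilon>0$, $$P_s(T,f,x,\epsilon)=\sup_{\mathcal{U}\in\mathcal{C}_X^o}\limsup_{n\to+\infty}\frac1n\log P_n(T,f,\mathcal{U},T^{-n}W^s_\epsilon(x,T)).$$
   Context: A TDS is a compact metric space $(X,d)$ with a homeomorphism $T$. $W^s_\epsilon(x,T)=\{y: d(T^nx,T^ny)\le\epsilon\ \forall n\ge0\}$. $f_n=\sum_{i=0}^{n-1}f\circ T^i$, $d_n(x,y)=\max_{0\le i<n}d(T^ix,T^iy)$, $P_n(T,f,\delta,K)=\sup\sum_{x\in E}\exp f_n(x)$ over $E\subseteq K$ with distinct points at $d_n$-distance $>\delta$, and $P_s(T,f,x,\epsilon)=\lim_{\delta\to0}\limsup_n\frac1n\log P_n(T,f,\delta,T^{-n}W^s_\epsilon(x,T))$. $\mathcal{C}_X$ = finite Borel covers, $\mathcal{C}^o_X$ = finite open covers; $\mathcal{V}\succeq\mathcal{U}$ means refinement; $\mathcal{U}_0^{n-1}=\bigvee_{i=0}^{n-1}T^{-i}\mathcal{U}$; $P_n(T,f,\mathcal{U},K)=\inf\{\sum_{V\in\mathcal{V}}\sup_{x\in V\cap K}\exp f_n(x):\mathcal{V}\in\mathcal{C}_X,\mathcal{V}\succeq\mathcal{U}_0^{n-1}\}$ (empty intersections contribute $0$). *)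

(* Defs.v *)
From HB Require Import structures.
From mathcomp Require Import all_boot all_order all_algebra.
From mathcomp Require Import all_classical all_reals.
From mathcomp Require Import ereal topology normedtype sequences exp measure.
Set Implicit Arguments. Unset Strict Implicit. Unset Printing Implicit Defensive.
Import Order.TTheory GRing.Theory Num.Theory.
Local Open Scope classical_set_scope.
Local Open Scope ring_scope.

Section TDS.
Variables (R : realType) (X : choiceType) (d : X -> X -> R).

Definition is_metric : Prop :=
  [/\ forall x y, 0 <= d x y,
      forall x y, d x y = 0 <-> x = y,
      forall x y, d x y = d y x &
      forall x y z, d x z <= d x y + d y z].

Definition dball (x : X) (r : R) : set X := [set y | d x y < r].

Definition dopen (A : set X) : Prop :=
  forall x, A x -> exists2 r : R, 0 < r & dball x r `<=` A.

Definition dcompact : Prop :=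
  forall (I : Type) (U : I -> set X), (forall i, dopen (U i)) ->
    (forall x, exists i, U i x) ->
    exists s : seq I, forall x, has (fun i => `[< U i x >]) s.

Definition dcontinuous_map (g : X -> X) : Prop :=
  forall x (e : R), 0 < e -> exists2 r : R, 0 < r &
    forall y, d x y < r -> d (g x) (g y) < e.

Definition dcontinuous_fun (g : X -> R) : Prop :=
  forall x (e : R), 0 < e -> exists2 r : R, 0 < r &
    forall y, d x y < r -> `|g x - g y| < e.

Definition dhomeo (T Tinv : X -> X) : Prop :=
  [/\ cancel T Tinv, cancel Tinv T, dcontinuous_map T & dcontinuous_map Tinv].

Definition dborel (A : set X) : Prop := <<s dopen >> A.

Variables (T : X -> X) (f : X -> R).

Definition Ws (x : X) (eps : R) : set X :=
  [set y | forall n : nat, d (iter n T x) (iter n T y) <= eps].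

Definition fsum (n : nat) (x : X) : R := \sum_(i < n) f (iter i T x).

Definition dn (n : nat) (x y : X) : R :=
  \big[Num.max/0]_(i < n) d (iter i T x) (iter i T y).

Definition separated (n : nat) (delta : R) (K E : set X) : Prop :=
  [/\ finite_set E, E `<=` K &
      forall a b, E a -> E b -> a <> b -> delta < dn n a b].

Definition Pn_sep (n : nat) (delta : R) (K : set X) : R :=
  sup [set (\sum_(x \in E) expR (fsum n x))%R | E in separated n delta K].

Definition Ps (x : X) (eps : R) : \bar R :=
  lim ((limn_esup (fun n : nat =>
          ((n%:R)^-1 * ln (Pn_sep n delta ((iter n T) @^-1` Ws x eps)))%:E))
       @[delta --> 0^'+]).

Definition open_cover (U : set (set X)) : Prop :=
  [/\ finite_set U, U `<=` dopen & forall x, exists2 A, U A & A x].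

Definition borel_cover (V : set (set X)) : Prop :=
  [/\ finite_set V, V `<=` dborel & forall x, exists2 A, V A & A x].

Definition refines (V W : set (set X)) : Prop :=
  forall A, V A -> exists2 B, W B & A `<=` B.

Definition join_cover (U : set (set X)) (n : nat) : set (set X) :=
  [set A | exists g : nat -> set X, (forall i, (i < n)%N -> U (g i)) /\
     A = \bigcap_(i in [set i : nat | (i < n)%N]) ((iter i T) @^-1` g i)].

Definition cell_weight (n : nat) (K V : set X) : R :=
  if `[< V `&` K = set0 >] then 0
  else sup [set expR (fsum n x) | x in V `&` K].

Definition Pn_cov (n : nat) (U : set (set X)) (K : set X) : R :=
  inf [set (\sum_(V \in W) cell_weight n K V)%R
      | W in [set W | borel_cover W /\ refines W (join_cover U n)]].

End TDS.

(* Main.v *)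
Require Import Defs.
From HB Require Import structures.
From mathcomp Require Import all_boot all_order all_algebra.
From mathcomp Require Import all_classical all_reals.
From mathcomp Require Import ereal topology normedtype sequences exp measure.
From mathcomp Require Import realfun.
From mathcomp Require Import lra.
Import Order.TTheory GRing.Theory Num.Theory.
Local Open Scope classical_set_scope.
Local Open Scope ring_scope.
Set Implicit Arguments. Unset Strict Implicit. Unset Printing Implicit Defensive.

Lemma seq_min_pos (R : realType) (A : eqType) (s : seq A) (h : A -> R) :
  (forall a, 0 < h a) -> exists2 L, 0 < L & forall a, a \in s -> L <= h a.
Proof.
move=> hp; elim: s => [|a s [L L0 HL]]; first by exists 1.
exists (Num.min (h a) L); first by rewrite lt_min hp L0.
move=> b; rewrite inE => /orP[/eqP->|bs]; first by rewrite ge_min lexx.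
by rewrite ge_min HL ?orbT.
Qed.

Lemma seq_max_ub (R : realType) (A : eqType) (s : seq A) (h : A -> R) :
  exists M, forall a, a \in s -> h a <= M.
Proof.
elim: s => [|a s [M HM]]; first by exists 0.
exists (Num.max (h a) M) => b; rewrite inE => /orP[/eqP->|bs].
  by rewrite le_max lexx.
by rewrite le_max HM ?orbT.
Qed.

Section Basic.
Variables (R : realType) (X : choiceType) (d : X -> X -> R).
Hypothesis hm : is_metric d.

Lemma d_ge0 x y : 0 <= d x y. Proof. by case: hm. Qed.
Lemma d_refl x : d x x = 0. Proof. by case: hm => _ H _ _; apply (proj2 (H x x)). Qed.
Lemma d_sym x y : d x y = d y x. Proof. by case: hm. Qed.
Lemma d_tri x y z : d x z <= d x y + d y z. Proof. by case: hm. Qed.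
Lemma d_eq0 x y : d x y = 0 -> x = y. Proof. by case: hm => _ H _ _; apply (proj1 (H x y)). Qed.

Lemma dball_open x r : dopen d (dball d x r).
Proof.
move=> y; rewrite /dball /= => hy; exists (r - d x y); first by rewrite subr_gt0.
move=> z; rewrite /dball /= => hz.
have := d_tri x y z; move: hz; rewrite ltrBrDl => hz hle.
exact: (le_lt_trans hle).
Qed.

Lemma dopenI A B : dopen d A -> dopen d B -> dopen d (A `&` B).
Proof.
move=> hA hB y [Ay By]; have [r1 r10 h1] := hA y Ay; have [r2 r20 h2] := hB y By.
exists (Num.min r1 r2); first by rewrite lt_min r10 r20.
move=> z; rewrite /dball /= lt_min => /andP[z1 z2]; split.
  by apply: h1. by apply: h2.
Qed.

Lemma dopenT : dopen d setT.
Proof. by move=> y _; exists 1. Qed.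

Lemma dopen_borel A : dopen d A -> dborel d A.
Proof. by move=> hA; apply: sub_sigma_algebra. Qed.

Lemma dclosed_borel A : dopen d (~` A) -> dborel d A.
Proof.
move=> hA; rewrite /dborel -[A]setCK -setTD; apply: sigma_algebraCD.
exact: sub_sigma_algebra.
Qed.

Lemma lebesgue (U : set (set X)) : dcompact d -> U `<=` dopen d ->
  (forall y, exists2 A, U A & A y) ->
  exists2 L : R, 0 < L & forall z, exists2 A, U A & [set w | d z w <= L] `<=` A.
Proof.
move=> hc hU hcov.
have hr : forall y, exists r : R, 0 < r /\ exists2 A, U A & dball d y (r *+ 2) `<=` A.
  move=> y; have [A UA Ay] := hcov y; have [r r0 hr] := hU A UA y Ay.
  exists (r / 2); split; first by rewrite divr_gt0.
  by exists A => //; rewrite mulr2n -splitr.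
pose rho y := projT1 (cid (hr y)).
have rhoP y : 0 < rho y /\ exists2 A, U A & dball d y (rho y *+ 2) `<=` A.
  exact: (projT2 (cid (hr y))).
have [s hs] : exists s : seq X, forall z, has (fun i => `[< dball d i (rho i) z >]) s.
  apply: (hc X (fun y => dball d y (rho y)) (fun y => @dball_open y (rho y))).
  by move=> y; exists y; rewrite /dball /= d_refl; case: (rhoP y).
have [L L0 HL] := @seq_min_pos R X s (fun y => rho y) (fun y => proj1 (rhoP y)).
exists L => // z; have /hasP[y ys /asboolP yz] := hs z.
have [_ [A UA hA]] := rhoP y; exists A => // w /= hw; apply: hA.
rewrite /dball /=; apply: (le_lt_trans (d_tri y z w)).
rewrite mulr2n; apply: ltr_leD => //; apply: (le_trans hw); exact: HL.
Qed.

End Basic.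

Section Dyn.
Variables (R : realType) (X : choiceType) (d : X -> X -> R) (T : X -> X) (f : X -> R).
Hypothesis hm : is_metric d.
Hypothesis hTc : dcontinuous_map d T.

Lemma iter_cont n : dcontinuous_map d (iter n T).
Proof.
elim: n => [|n IH] x e e0 /=; first by exists e.
have [r1 r10 h1] := hTc (iter n T x) e0.
have [r2 r20 h2] := IH x r1 r10.
by exists r2 => // y /h2 /h1.
Qed.

Notation dn := (dn d T).

Lemma dn0 x y : dn 0 x y = 0. Proof. by rewrite /Defs.dn big_ord0. Qed.

Lemma dnS n x y : dn n.+1 x y = Num.max (d x y) (dn n (T x) (T y)).
Proof.
rewrite /Defs.dn big_ord_recl /=; congr Num.max.
by apply: eq_bigr => i _; rewrite /= /bump /= add0n -!iterS !iterSr.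
Qed.

Lemma dn_ge0 n x y : 0 <= dn n x y.
Proof. elim: n x y => [|n IH] x y; first by rewrite dn0. by rewrite dnS le_max IH orbT. Qed.

Lemma dn_leP n x y r : 0 <= r ->
  (dn n x y <= r <-> forall i, (i < n)%N -> d (iter i T x) (iter i T y) <= r).
Proof.
move=> r0; elim: n x y => [|n IH] x y; first by rewrite dn0; split => // _ i.
rewrite dnS ge_max; split.
  move=> /andP[h1 /IH h2] [|i] hi; first done; rewrite !iterSr; exact: h2.
move=> h; apply/andP; split; first by apply: (h 0%N).
by apply/IH => i hi; rewrite -!iterSr; apply: (h i.+1).
Qed.

Lemma dn_ltP n x y r : 0 < r ->
  (dn n x y < r <-> forall i, (i < n)%N -> d (iter i T x) (iter i T y) < r).
Proof.
move=> r0; elim: n x y => [|n IH] x y; first by rewrite dn0; split => // _ i.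
rewrite dnS gt_max; split.
  move=> /andP[h1 /IH h2] [|i] hi; first done; rewrite !iterSr; exact: h2.
move=> h; apply/andP; split; first by apply: (h 0%N).
by apply/IH => i hi; rewrite -!iterSr; apply: (h i.+1).
Qed.

Lemma dn_ge n x y i : (i < n)%N -> d (iter i T x) (iter i T y) <= dn n x y.
Proof. by move=> hi; move: i hi; apply/dn_leP => //; apply: dn_ge0. Qed.

Lemma dn_sym n x y : dn n x y = dn n y x.
Proof. by rewrite /Defs.dn; apply: eq_bigr => i _; rewrite d_sym. Qed.

Lemma dn_refl n x : dn n x x = 0.
Proof.
apply/le_anti; rewrite dn_ge0 andbT; apply/dn_leP => // i _; by rewrite d_refl.
Qed.

Lemma dn_tri n x y z : dn n x z <= dn n x y + dn n y z.
Proof.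
apply/dn_leP; first by rewrite addr_ge0 // dn_ge0.
move=> i hi; apply: (le_trans (d_tri hm _ (iter i T y) _)).
by apply: lerD; apply: dn_ge.
Qed.

Lemma dn_cont n y (e : R) : 0 < e -> exists2 r : R, 0 < r &
  forall z, d y z < r -> dn n y z < e.
Proof.
move=> e0; elim: n y => [|n IH] y; first by exists 1 => // z _; rewrite dn0.
have [r1 r10 h1] := IH (T y).
have [r3 r30 h3] := hTc y r10.
exists (Num.min e r3); first by rewrite lt_min e0 r30.
move=> z; rewrite lt_min => /andP[z2 z3]; rewrite dnS gt_max.
by rewrite z2 h1 // h3.
Qed.

Lemma dnball_open n y r : dopen d [set z | dn n y z < r].
Proof.
move=> z /= hz; have h0 : 0 < r - dn n y z by rewrite subr_gt0.
have [r' r'0 h] := @dn_cont n z _ h0.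
exists r' => // w /h; rewrite /dball /= => hw.
apply: (le_lt_trans (dn_tri n y z w)); by rewrite -ltrBrDl.
Qed.

Lemma dn_gt_open n y r : dopen d [set z | r < dn n y z].
Proof.
move=> z /= hz; have h0 : 0 < dn n y z - r by rewrite subr_gt0.
have [r' r'0 h] := @dn_cont n z _ h0.
exists r' => // w /h; rewrite /dball /= => hw.
have := dn_tri n y w z; rewrite (dn_sym n w z) => hle.
lra.
Qed.

End Dyn.

Section Fun.
Variables (R : realType) (X : choiceType) (d : X -> X -> R) (f : X -> R).
Hypothesis hm : is_metric d.
Hypothesis hc : dcompact d.
Hypothesis hf : dcontinuous_fun d f.

Lemma fball_open y (r : R) : dopen d [set w | `|f y - f w| < r].
Proof.
move=> z /= hz; have h0 : 0 < r - `|f y - f z| by rewrite subr_gt0.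
have [r' r'0 h] := hf z h0.
exists r' => // w /h hw /=.
apply: (le_lt_trans (ler_distD (f z) _ _)); by rewrite -ltrBrDl.
Qed.

Lemma f_bounded : exists M : R, forall y, `|f y| <= M.
Proof.
have hcov : forall y, exists i, [set w | `|f i - f w| < 1] y.
  by move=> y; exists y; rewrite /= subrr normr0.
have [s hs] := hc (fun y => @fball_open y 1) hcov.
have [M HM] := @seq_max_ub R X s (fun y => `|f y| + 1).
exists M => z; have /hasP[y ys /asboolP /= yz] := hs z.
apply: (le_trans _ (HM y ys)).
have h1 : `|f z| <= `|f y| + `|f y - f z|.
  rewrite -{1}[f z](subrKC (f y)) (distrC (f y)); exact: ler_normD.
lra.
Qed.

Lemma f_unif (g : R) : 0 < g -> exists2 del : R, 0 < del &
  forall y z, d y z <= del -> `|f y - f z| <= g.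
Proof.
move=> g0.
have [L L0 HL] : exists2 L : R, 0 < L & forall z, exists2 A,
    [set [set w | `|f y - f w| < g / 2] | y in setT] A & [set w | d z w <= L] `<=` A.
  apply: (@lebesgue R X d hm _ hc).
  - by move=> A [y _ <-]; apply: fball_open.
  - move=> y; exists [set w | `|f y - f w| < g / 2]; first by exists y.
    by rewrite /= subrr normr0 divr_gt0.
exists L => // y z hyz; have [A [y0 _ <-] hA] := HL y.
have hyy : d y y <= L by rewrite (d_refl hm); apply: ltW.
have /= h1 := hA y hyy.
have /= h2 := hA z hyz.
have h3 := ler_distD (f y0) (f y) (f z).
rewrite (distrC (f y) (f y0)) in h3. lra.
Qed.

End Fun.

Section FS.
Variable (R : realType).

Lemma fset_seq (I : choiceType) (A : set I) : finite_set A ->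
  exists s : seq I, uniq s /\ A = [set` s].
Proof.
move=> /finite_seqP[s ->]; exists (undup s); split; first exact: undup_uniq.
by apply/seteqP; split => x /=; rewrite mem_undup.
Qed.

Lemma fsum_sub_le (I : choiceType) (A B : set I) (F : I -> R) :
  A `<=` B -> finite_set B -> (forall i, B i -> 0 <= F i) ->
  \sum_(i \in A) F i <= \sum_(i \in B) F i.
Proof.
move=> AB fB F0; rewrite [X in _ <= X](fsbigID A) // setIidr //.
rewrite lerDl; apply: fsumr_ge0 => i [Bi _]; exact: F0.
Qed.

Lemma sum_undup_le (I : eqType) (t : seq I) (F : I -> R) :
  (forall i, i \in t -> 0 <= F i) ->
  \sum_(j <- undup t) F j <= \sum_(j <- t) F j.
Proof.
elim: t => [|x t IH] F0 /=; first by [].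
have IH' : \sum_(j <- undup t) F j <= \sum_(j <- t) F j.
  by apply: IH => i it; apply: F0; rewrite inE it orbT.
rewrite big_cons; case: ifP => xt; last by rewrite big_cons lerD2l.
apply: (le_trans IH'); rewrite lerDr; apply: F0; by rewrite inE eqxx.
Qed.

Lemma fsum_image_le (I J : choiceType) (A : set I) (h : I -> J) (F : J -> R) :
  finite_set A -> (forall i, A i -> 0 <= F (h i)) ->
  \sum_(j \in h @` A) F j <= \sum_(i \in A) F (h i).
Proof.
move=> /fset_seq[s [us ->]] F0.
have -> : h @` [set` s] = [set` undup (map h s)].
  apply/seteqP; split => j /=.
    by move=> [i si <-]; rewrite mem_undup; apply: map_f.
  by rewrite mem_undup => /mapP[i si ->]; exists i.
rewrite -fsbig_seq ?undup_uniq // -fsbig_seq //.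
rewrite -(big_map h xpredT F); apply: sum_undup_le.
by move=> j /mapP[i si ->]; apply: F0.
Qed.

End FS.

Section Join.
Variables (R : realType) (X : choiceType) (d : X -> X -> R) (T : X -> X).
Hypothesis hm : is_metric d.
Hypothesis hTc : dcontinuous_map d T.

Lemma bigcap_ltS (P : nat -> set X) n :
  \bigcap_(i in [set i | (i < n.+1)%N]) P i =
  \bigcap_(i in [set i | (i < n)%N]) P i `&` P n.
Proof.
apply/seteqP; split => x /=.
  move=> h; split; last by apply: h => /=.
  by move=> i /= hi; apply: h => /=; rewrite ltnS ltnW.
move=> [h1 h2] i /=; rewrite ltnS leq_eqVlt => /orP[/eqP->//|hi]; exact: h1.
Qed.

Lemma bigcap_lt0 (P : nat -> set X) :
  \bigcap_(i in [set i | (i < 0)%N]) P i = setT.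
Proof. by apply/seteqP; split => x //= _ i. Qed.

Lemma dopen_preimage g A : dcontinuous_map d g -> dopen d A -> dopen d (g @^-1` A).
Proof.
move=> gc hA x /= Ax; have [r r0 hr] := hA (g x) Ax.
have [r' r'0 h'] := gc x r r0.
by exists r' => // y /h' /hr.
Qed.

Lemma bigcap_open (P : nat -> set X) n : (forall i, (i < n)%N -> dopen d (P i)) ->
  dopen d (\bigcap_(i in [set i | (i < n)%N]) P i).
Proof.
elim: n => [|n IH] hP; first by rewrite bigcap_lt0; apply: dopenT.
rewrite bigcap_ltS; apply: dopenI.
  by apply: IH => i hi; apply: hP; rewrite ltnS ltnW.
exact: hP.
Qed.

Lemma join_open U n : U `<=` dopen d -> join_cover T U n `<=` dopen d.
Proof.
move=> hU A [g [hg ->]]; apply: bigcap_open => i hi.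
apply: dopen_preimage; first exact: iter_cont.
exact: hU (hg i hi).
Qed.

Lemma join_fin U n : finite_set U -> finite_set (join_cover T U n).
Proof.
move=> fU; elim: n => [|n IH].
  apply: (@sub_finite_set _ _ [set setT]); last exact: finite_set1.
  by move=> A [g [_ ->]]; rewrite bigcap_lt0.
apply: (@sub_finite_set _ _ [set A `&` (iter n T @^-1` B) | A in join_cover T U n & B in U]).
  move=> A [g [hg ->]]; exists (\bigcap_(i in [set i | (i < n)%N]) (iter i T @^-1` g i)).
    by exists g; split => // i hi; apply: hg; rewrite ltnS ltnW.
  exists (g n); first exact: hg.
  by rewrite bigcap_ltS.
exact: finite_image2.
Qed.

Lemma join_cov U n : (forall y, exists2 A, U A & A y) ->
  forall y, exists2 C, join_cover T U n C & C y.
Proof.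
move=> hcov y.
pose g i := projT1 (cid2 (hcov (iter i T y))).
have gP i : U (g i) /\ g i (iter i T y).
  by rewrite /g; case: (cid2 _) => /= A h1 h2.
exists (\bigcap_(i in [set i | (i < n)%N]) (iter i T @^-1` g i)).
  by exists g; split => // i _; case: (gP i).
by move=> i _ /=; case: (gP i).
Qed.

End Join.

Lemma sum_seq_le (R : realType) (I : eqType) (s : seq I) (F : I -> R) (c : R) :
  (forall x, x \in s -> F x <= c) -> \sum_(x <- s) F x <= (size s)%:R * c.
Proof.
elim: s => [|a s IH] h /=; first by rewrite big_nil mul0r.
rewrite big_cons -addn1 natrD mulrDl mul1r addrC; apply: lerD.
  by apply: IH => x xs; apply: h; rewrite inE xs orbT.
by apply: h; rewrite inE eqxx.
Qed.

Section Sep.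
Variables (R : realType) (X : choiceType) (d : X -> X -> R) (T : X -> X) (f : X -> R).
Hypothesis hm : is_metric d.
Hypothesis hTc : dcontinuous_map d T.
Hypothesis hc : dcompact d.
Hypothesis hf : dcontinuous_fun d f.

Notation dn := (dn d T).

Lemma sep_bound n (del : R) : 0 < del -> exists N : nat, forall s : seq X, uniq s ->
  (forall a b, a \in s -> b \in s -> a != b -> del < dn n a b) -> (size s <= N)%N.
Proof.
move=> d0.
have hcov : forall y, exists i, [set z | dn n i z < del / 2] y.
  by move=> y; exists y; rewrite /= (dn_refl T hm) divr_gt0.
have [t ht] := hc (fun y => @dnball_open R X d T hm hTc n y (del / 2)) hcov.
have hex : forall a, exists y, y \in t /\ dn n y a < del / 2.
  by move=> a; have /hasP[y yt /asboolP ya] := ht a; exists y.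
pose c a := projT1 (cid (hex a)).
have cP a : c a \in t /\ dn n (c a) a < del / 2 by exact: (projT2 (cid (hex a))).
exists (size t) => s us hs.
have cinj : {in s &, injective c}.
  move=> a b as_ bs cab; apply/eqP; apply/negPn/negP => nab.
  have h1 := hs a b as_ bs nab.
  have h2 := dn_tri T hm n a (c a) b.
  rewrite (dn_sym T hm n a (c a)) {2}cab in h2.
  have [_ ha] := cP a; have [_ hb] := cP b.
  lra.
rewrite -(size_map c); apply: uniq_leq_size; first by rewrite map_inj_in_uniq.
by move=> y /mapP[a _ ->]; case: (cP a).
Qed.

Lemma max_sep n (del : R) K : 0 < del -> exists s : seq X,
  [/\ uniq s, Defs.separated d T n del K [set` s] &
      forall y, K y -> exists2 e, e \in s & dn n e y <= del].
Proof.
move=> d0; have [N HN] := sep_bound n d0.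
pose P k := `[< exists s : seq X, [/\ uniq s, size s = k, [set` s] `<=` K &
   forall a b, a \in s -> b \in s -> a != b -> del < dn n a b] >].
have P0 : exists k, P k.
  by exists 0%N; apply/asboolP; exists [::]; split.
have Pub : forall k, P k -> (k <= N)%N.
  by move=> k /asboolP [s [us <- _ hs]]; apply: HN.
case: (ex_maxnP P0 Pub) => m /asboolP [s [us sm sK hs]] maxm.
exists s; split => //.
  split; [exact: finite_seq|exact: sK|].
  by move=> a b /= as_ bs nab; apply: hs => //; apply/eqP.
move=> y Ky; have [//|hno] := pselect (exists2 e, e \in s & dn n e y <= del).
have ys : y \notin s.
  apply/negP => ys; apply: hno; exists y => //; by rewrite (dn_refl T hm) ltW.
have hlt : forall e, e \in s -> del < dn n e y.
  move=> e es; rewrite ltNge; apply/negP => h; apply: hno; by exists e.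
have : P m.+1.
  apply/asboolP; exists (y :: s); split => //=.
  - by rewrite ys us.
  - by rewrite sm.
  - by move=> z /=; rewrite inE => /orP[/eqP->//|zs]; apply: sK.
  move=> a b; rewrite !inE => /orP[/eqP->|as_] /orP[/eqP->|bs] nab.
  + by rewrite eqxx in nab.
  + by rewrite (dn_sym T hm); apply: hlt.
  + by apply: hlt.
  + by apply: hs.
by move/maxm; rewrite ltnn.
Qed.

End Sep.

Section Press.
Variables (R : realType) (X : choiceType) (d : X -> X -> R) (T : X -> X) (f : X -> R).
Hypothesis hm : is_metric d.
Hypothesis hTc : dcontinuous_map d T.
Hypothesis hc : dcompact d.
Hypothesis hf : dcontinuous_fun d f.

Lemma fsum_bound : exists M : R, forall n y, fsum T f n y <= n%:R * M.
Proof.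
have [M HM] := f_bounded hc hf; exists M => n y.
rewrite /fsum; apply: (le_trans (y := \sum_(i < n) M)).
  by apply: ler_sum => i _; apply: (le_trans (ler_norm _)).
by rewrite sumr_const card_ord mulr_natl.
Qed.

Variables (n : nat) (K : set X) (y0 : X).
Hypothesis Ky0 : K y0.

Definition SS (del : R) := [set \sum_(x \in E) expR (fsum T f n x) | E in Defs.separated d T n del K].

Lemma SS_ub del : 0 < del -> has_ubound (SS del).
Proof.
move=> d0; have [N HN] := sep_bound hm hTc hc n d0.
have [M HM] := fsum_bound.
exists (N%:R * expR (n%:R * M)) => _ [E [fE EK hE] <-].
have [s [us sE]] := fset_seq fE; subst E.
rewrite -fsbig_seq //; apply: (le_trans (sum_seq_le (c := expR (n%:R * M)) _)).
  by move=> y _; rewrite ler_expR.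
apply: ler_wpM2r; first exact: ltW (expR_gt0 _).
rewrite ler_nat; apply: HN => // a b as_ bs nab; apply: hE => //; exact/eqP.
Qed.

Lemma SS_ge del E : 0 < del -> Defs.separated d T n del K E ->
  \sum_(x \in E) expR (fsum T f n x) <= Pn_sep d T f n del K.
Proof. by move=> d0 hE; apply: (ub_le_sup (SS_ub d0)); exists E. Qed.

Lemma SS0 del : SS del 0.
Proof.
exists set0; last by rewrite fsbig_set0.
by split.
Qed.

Lemma Sep_pos del : 0 < del -> 0 < Pn_sep d T f n del K.
Proof.
move=> d0; apply: (lt_le_trans _ (@SS_ge del [set y0] d0 _)).
  by rewrite fsbig_set1 expR_gt0.
split; [exact: finite_set1| by move=> y ->|by move=> a b -> ->].
Qed.

Lemma Sep_anti d1 d2 : 0 < d1 -> d1 <= d2 ->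
  Pn_sep d T f n d2 K <= Pn_sep d T f n d1 K.
Proof.
move=> d10 d12; have d20 : 0 < d2 by apply: (lt_le_trans d10).
apply: sup_le; last first.
- by split; [exists 0; exact: SS0|exact: SS_ub].
- by exists 0; exact: SS0.
move=> _ [E [fE EK hE] <-]; apply: le_down; exists E => //.
split => // a b Ea Eb nab; apply: (le_lt_trans d12); exact: hE.
Qed.

Lemma cw_ge0 V : 0 <= cell_weight T f n K V.
Proof.
rewrite /cell_weight; case: ifPn => // /asboolP hV.
have [z [Vz Kz]] : exists z, (V `&` K) z.
  by apply/set0P; apply/eqP.
have [M HM] := fsum_bound.
apply: (le_trans (ltW (expR_gt0 (fsum T f n z)))).
apply: ub_le_sup; last by exists z.
by exists (expR (n%:R * M)) => _ [w _ <-]; rewrite ler_expR.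
Qed.

Lemma cw_ge V y : V y -> K y -> expR (fsum T f n y) <= cell_weight T f n K V.
Proof.
move=> Vy Ky; rewrite /cell_weight; case: ifPn => [/asboolP hV|_].
  by have : (V `&` K) y by []; rewrite hV.
have [M HM] := fsum_bound.
apply: ub_le_sup; last by exists y.
by exists (expR (n%:R * M)) => _ [w _ <-]; rewrite ler_expR.
Qed.

Lemma cw_le V c : 0 <= c -> (forall y, V y -> K y -> expR (fsum T f n y) <= c) ->
  cell_weight T f n K V <= c.
Proof.
move=> c0 hc'; rewrite /cell_weight; case: ifPn => // /asboolP hV.
apply: ge_sup.
  have [z hz] : exists z, (V `&` K) z by apply/set0P; apply/eqP.
  by exists (expR (fsum T f n z)); exists z.
by move=> _ [w [Vw Kw] <-]; apply: hc'.
Qed.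

Definition CS (U : set (set X)) := [set \sum_(V \in W) cell_weight T f n K V
      | W in [set W | borel_cover d W /\ refines W (join_cover T U n)]].

Lemma CS_lb U : has_lbound (CS U).
Proof.
by exists 0 => _ [W _ <-]; apply: fsumr_ge0 => V _; apply: cw_ge0.
Qed.

Lemma Cov_le U W : borel_cover d W -> refines W (join_cover T U n) ->
  Pn_cov d T f n U K <= \sum_(V \in W) cell_weight T f n K V.
Proof. by move=> hW hr; apply: (ge_inf (CS_lb U)); exists W. Qed.

Lemma join_borel U : open_cover d U -> borel_cover d (join_cover T U n).
Proof.
move=> [fU oU cU]; split; first exact: join_fin.
  by move=> A hA; apply: dopen_borel; exact: (join_open hTc oU hA).
exact: join_cov.
Qed.

Lemma CS_ne U : open_cover d U -> CS U !=set0.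
Proof.
move=> hU; eexists; exists (join_cover T U n) => //; split; first exact: join_borel.
by move=> A hA; exists A.
Qed.

Lemma Cov_ge U c : open_cover d U ->
  (forall W, borel_cover d W -> refines W (join_cover T U n) ->
     c <= \sum_(V \in W) cell_weight T f n K V) ->
  c <= Pn_cov d T f n U K.
Proof.
move=> hU h; apply: lb_le_inf; first exact: CS_ne.
by move=> _ [W [hW hr] <-]; apply: h.
Qed.

Lemma Cov_pos U : open_cover d U -> 0 < Pn_cov d T f n U K.
Proof.
move=> hU; apply: (lt_le_trans (expR_gt0 (fsum T f n y0))).
apply: Cov_ge => // W [fW bW cW] hr.
have [V WV Vy0] := cW y0.
apply: (le_trans (cw_ge Vy0 Ky0)).
rewrite -(@fsbig_set1 R 0 +%R _ V (fun V => cell_weight T f n K V)).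
apply: fsum_sub_le => //; first by move=> _ ->.
by move=> i _; apply: cw_ge0.
Qed.

End Press.

Lemma fsum_ler (R : realType) (I : choiceType) (A : set I) (F G : I -> R) :
  finite_set A -> (forall i, A i -> F i <= G i) ->
  \sum_(i \in A) F i <= \sum_(i \in A) G i.
Proof.
move=> /fset_seq[s [us ->]] h; rewrite -!fsbig_seq // big_seq_cond [X in _ <= X]big_seq_cond.
by apply: ler_sum => i /andP[si _]; apply: h.
Qed.

Section Core1.
Variables (R : realType) (X : choiceType) (d : X -> X -> R) (T : X -> X) (f : X -> R).
Hypothesis hm : is_metric d.
Hypothesis hTc : dcontinuous_map d T.
Hypothesis hc : dcompact d.
Hypothesis hf : dcontinuous_fun d f.

Notation dn := (dn d T).

Lemma sep_le_cov (del : R) : 0 < del -> exists U, open_cover d U /\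
  forall n K, Pn_sep d T f n del K <= Pn_cov d T f n U K.
Proof.
move=> d0.
have hcov : forall y, exists i, dball d i (del / 2) y.
  by move=> y; exists y; rewrite /dball /= (d_refl hm) divr_gt0.
have [t ht] := hc (fun y => @dball_open R X d hm y (del / 2)) hcov.
pose U := [set dball d y (del / 2) | y in [set` t]].
have hU : open_cover d U.
  split; first exact: finite_image.
    by move=> A [y _ <-]; apply: dball_open.
  move=> z; have /hasP[y yt /asboolP yz] := ht z.
  by exists (dball d y (del / 2)) => //; exists y.
exists U; split => // n K.
apply: ge_sup; first by exists 0; exact: SS0.
move=> _ [E [fE EK hE] <-].
apply: Cov_ge => // W [fW bW cW] hr.
pose c a := projT1 (cid2 (cW a)).
have cP a : W (c a) /\ c a a by rewrite /c; case: (cid2 _).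
have cinj : set_inj E c.
  move=> a b; rewrite !inE => Ea Eb cab; apply: contrapT => nab.
  have := hE a b Ea Eb nab; apply/negP; rewrite -leNgt; apply: ltW.
  have [Wc ca] := cP a; have [_ cb] := cP b; rewrite -cab in cb.
  have [C [g [hg ->]] hCC] := hr _ Wc.
  apply/dn_ltP => // i hi.
  have := hCC a ca i hi; have := hCC b cb i hi.
  have [y _ <-] := hg i hi; rewrite /dball /= => h1 h2.
  apply: (le_lt_trans (d_tri hm _ y _)); rewrite (d_sym hm _ y) (splitr del).
  exact: ltrD.
apply: (le_trans (y := \sum_(a \in E) cell_weight T f n K (c a))).
  apply: fsum_ler => // a Ea; apply: (cw_ge T hc hf); [by case: (cP a)|exact: EK].
rewrite -fsbig_image //; apply: fsum_sub_le => //.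
  by move=> _ [a _ <-]; case: (cP a).
by move=> V _; apply: (cw_ge0 T hc hf).
Qed.

End Core1.

Section Core2.
Variables (R : realType) (X : choiceType) (d : X -> X -> R) (T : X -> X) (f : X -> R).
Hypothesis hm : is_metric d.
Hypothesis hTc : dcontinuous_map d T.
Hypothesis hc : dcompact d.
Hypothesis hf : dcontinuous_fun d f.

Notation dn := (dn d T).

Lemma dopen_all n (del : R) (s : seq X) :
  dopen d [set w | forall a, a \in s -> del < dn n a w].
Proof.
elim: s => [|a s IH] w /= hw.
  by exists 1 => // z _ a; rewrite in_nil.
have [r1 r10 h1] := dn_gt_open hm hTc (hw a (mem_head a s)).
have hw2 : forall b, b \in s -> del < dn n b w by move=> b bs; apply: hw; rewrite in_cons bs orbT.
have [r2 r20 h2] := IH w hw2.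

exists (Num.min r1 r2); first by rewrite lt_min r10 r20.
move=> z; rewrite /dball /= lt_min => /andP[z1 z2] b; rewrite inE => /orP[/eqP->|bs].
  exact: (h1 z z1).
exact: (h2 z z2 b bs).
Qed.

Lemma cov_le_sep U (g : R) : open_cover d U -> 0 < g ->
  exists2 del : R, 0 < del & forall n K,
  Pn_cov d T f n U K <= expR (n%:R * g) * Pn_sep d T f n del K.
Proof.
move=> hU g0; have [fU oU cU] := hU.
have [L L0 HL] := lebesgue hm hc oU cU.
have [df df0 Hf] := f_unif hm hc hf g0.
pose del := Num.min L df.
have d0 : 0 < del by rewrite lt_min L0 df0.
have dL : del <= L by rewrite ge_min lexx.
have ddf : del <= df by rewrite ge_min lexx orbT.
exists del => // n K.
have [s [us [fs sK hs] hmax]] := max_sep hm hTc hc n K d0.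
pose B a := [set w | dn n a w <= del].
pose O := [set w | forall a, a \in s -> del < dn n a w].
pose W := B @` [set` s] `|` [set C `&` O | C in join_cover T U n].
have hB a : dborel d (B a).
  apply: dclosed_borel.
  have -> : ~` B a = [set w | del < dn n a w].
    apply/seteqP; split => w /=; rewrite /B /= ltNge; first by move/negP.
    by move/negP.
  exact: dn_gt_open.
have hW : borel_cover d W.
  split.
  - rewrite /W finite_setU; split; first exact: finite_image.
    by apply: finite_image; apply: join_fin.
  - move=> V [[a _ <-]|[C hC <-]]; first exact: hB.
    apply: dopen_borel; apply: dopenI; last exact: dopen_all.
    exact: (join_open hTc oU hC).
  - move=> w; have [[a as_ ha]|hno] := pselect (exists2 a, a \in s & dn n a w <= del).
      by exists (B a) => //; left; exists a.
    have [C hC Cw] := join_cov T n cU w.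
    exists (C `&` O); first by right; exists C.
    split => // a as_; rewrite ltNge; apply/negP => h; apply: hno; by exists a.
have hr : refines W (join_cover T U n).
  move=> V [[a _ <-]|[C hC <-]]; last by exists C => //; apply: subIsetl.
  pose gg i := projT1 (cid2 (HL (iter i T a))).
  have ggP i : U (gg i) /\ [set w | d (iter i T a) w <= L] `<=` gg i.
    by rewrite /gg; case: (cid2 _).
  exists (\bigcap_(i in [set i | (i < n)%N]) (iter i T @^-1` gg i)).
    by exists gg; split => // i _; case: (ggP i).
  move=> w /= hw i /= hi; have [_ hsub] := ggP i; apply: hsub => /=.
  apply: (le_trans _ dL); apply: (le_trans _ hw); exact: dn_ge.
have hzero : forall V, (W `\` (B @` [set` s])) V -> cell_weight T f n K V = 0.
  move=> V [[[a as_ <-]|[C hC <-]] nV]; first by exfalso; apply: nV; exists a.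
  rewrite /cell_weight ifT //; apply/asboolP.
  apply/seteqP; split => // w [[_ Ow] Kw]; have [e es he] := hmax w Kw.
  by have := Ow e es; rewrite ltNge he.
apply: (le_trans (Cov_le hc hf K hW hr)).
rewrite -(fsbig_widen (B @` [set` s]) W); last first.
- by move=> V hV; apply: hzero.
- by move=> V hV; left.
apply: (le_trans (fsum_image_le _ _)); [done|by move=> a _; apply: (cw_ge0 T hc hf)|].
apply: (le_trans (y := \sum_(a \in [set` s]) expR (n%:R * g) * expR (fsum T f n a))).
  apply: fsum_ler => // a as_.
  apply: cw_le; first by rewrite mulr_ge0 // ltW // expR_gt0.
  move=> y hy Ky; rewrite -expRD ler_expR.
  rewrite /fsum; apply: (le_trans (y := \sum_(i < n) (g + f (iter i T a)))).
    apply: ler_sum => i _.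
    have hd : d (iter i T a) (iter i T y) <= df.
      by apply: (le_trans _ ddf); apply: (le_trans _ hy); exact: dn_ge.
    have h1 := Hf _ _ hd.
    have h2 : f (iter i T y) - f (iter i T a) <= `|f (iter i T a) - f (iter i T y)|.
      by rewrite distrC ler_norm.
    lra.
  by rewrite big_split /= sumr_const card_ord mulr_natl.
rewrite -mulr_fsumr; apply: ler_wpM2l; first exact: ltW (expR_gt0 _).
apply: (SS_ge hm hTc hc hf) => //.
Qed.

End Core2.

Lemma LS_shift (R : realType) (u v : nat -> \bar R) (c : R) :
  (forall n, (u n <= c%:E + v n)%E) -> (limn_esup u <= c%:E + limn_esup v)%E.
Proof.
move=> h; rewrite /limn_esup /limf_esup.
rewrite -leeBlDl //; apply/ereal_infP => _ [V FV <-].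
rewrite leeBlDl //.
have h1 : (ereal_inf [set ereal_sup (u @` V0) | V0 in \oo] <= ereal_sup (u @` V))%E.
  by apply: ge_ereal_inf; exists (ereal_sup (u @` V)) => //; exists V.
apply: (le_trans h1); apply: ge_ereal_sup => _ [m Vm <-].
apply: (le_trans (h m)); apply: leeD2l; apply: ereal_sup_ubound; by exists m.
Qed.

Lemma LS_mono (R : realType) (u v : nat -> \bar R) :
  (forall n, (u n <= v n)%E) -> (limn_esup u <= limn_esup v)%E.
Proof.
move=> h; rewrite -[X in (_ <= X)%E]add0e; apply: LS_shift => n; by rewrite add0e.
Qed.

Unset Implicit Arguments.

Theorem lemma3p2 (R : realType) (X : choiceType) (d : X -> X -> R)
  (T Tinv : X -> X) (f : X -> R) :
  is_metric d -> dcompact d -> dhomeo d T Tinv -> dcontinuous_fun d f ->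
  forall (x : X) (eps : R), 0 < eps ->
  Ps d T f x eps =
  ereal_sup [set limn_esup (fun n : nat =>
               ((n%:R)^-1 * ln (Pn_cov d T f n U ((iter n T) @^-1` Ws d T x eps)))%:E)
            | U in open_cover d].
Proof.
move=> hm hc [TK TinvK hTc hTinvc] hf x eps eps0.
have Ky0 : forall n, (iter n T @^-1` Ws d T x eps) (iter n Tinv x).
  move=> n; rewrite /preimage /=; have -> : iter n T (iter n Tinv x) = x.
    elim: n => [//|n IH]; by rewrite iterSr iterS TinvK.
  by move=> k /=; rewrite (d_refl hm) ltW.
pose G del := limn_esup (fun n : nat =>
   ((n%:R)^-1 * ln (Pn_sep d T f n del (iter n T @^-1` Ws d T x eps)))%:E).
have Gmono : {in `]0, +oo[ &, {homo G : a b / a <= b >-> (b <= a)%E}}.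
  move=> a b; rewrite !in_itv /= !andbT => a0 b0 ab.
  apply: LS_mono => n; rewrite lee_fin; apply: ler_wpM2l.
    by rewrite invr_ge0 ler0n.
  rewrite ler_ln ?posrE; last 2 first.
  - exact: (Sep_pos hm hTc hc hf n (Ky0 n)).
  - exact: (Sep_pos hm hTc hc hf n (Ky0 n)).
  exact: (Sep_anti hm hTc hc hf).
have hPs : Ps d T f x eps = ereal_sup (G @` [set` `]0, +oo[%R]).
  rewrite /Ps; apply: cvg_lim; first exact: ereal_hausdorff.
  by apply: nonincreasing_at_right_cvge.
rewrite hPs; apply/eqP; rewrite eq_le; apply/andP; split.
  apply: ge_ereal_sup => _ [del /= hdel <-].
  move: hdel; rewrite in_itv /= andbT => d0.
  have [U [hU hle]] := sep_le_cov hm hTc hc hf d0.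
  apply: (le_trans _ (ereal_sup_ubound (_ : _ _))); last by exists U.
  apply: LS_mono => n; rewrite lee_fin; apply: ler_wpM2l.
    by rewrite invr_ge0 ler0n.
  have p1 := Sep_pos hm hTc hc hf n (Ky0 n) d0.
  have p2 := Cov_pos hTc hc hf n (Ky0 n) hU.
  by rewrite ler_ln ?posrE.
apply: ge_ereal_sup => _ [U hU <-].
apply/lee_addgt0Pr => g g0.
have [del d0 hle] := cov_le_sep hm hTc hc hf hU g0.
apply: (le_trans (y := (g%:E + G del)%E)).
  apply: LS_shift => n; rewrite -EFinD lee_fin.
  have p1 := Sep_pos hm hTc hc hf n (Ky0 n) d0.
  have p2 := Cov_pos hTc hc hf n (Ky0 n) hU.
  case: n p1 p2 => [|n] p1 p2.
    by rewrite invr0 !mul0r addr0 ltW.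
  have : ln (Pn_cov d T f n.+1 U (iter n.+1 T @^-1` Ws d T x eps)) <=
         n.+1%:R * g + ln (Pn_sep d T f n.+1 del (iter n.+1 T @^-1` Ws d T x eps)).
    rewrite -[X in X + _]expRK -lnM ?posrE ?expR_gt0 //.
    by rewrite ler_ln ?posrE ?mulr_gt0 ?expR_gt0.
  move=> h; rewrite -(ler_pM2l (_ : 0 < n.+1%:R)) ?ltr0n //.
  rewrite mulrDr !mulrA mulfV ?pnatr_eq0 // !mul1r.
  exact: h.
rewrite addeC; apply: leeD2r.
apply: ereal_sup_ubound; exists del => //=.
by rewrite in_itv /= andbT.
Qed.
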